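(* Let $\{G_i\}$ be a family of connected graphs with common induced subgraph $J$, embedded as $J_i\subseteq G_i$, and let $H=\amalg\{(G_i|J_i)\}$. If $a\in V(H)$ and $uv\in\parallel(J_i:G_i)$ satisfy $d_H(a,u)\neq d_H(a,v)$, then $a\in V(G_i-J_i)$.
   Context: All graphs are finite, simple, non-null and connected; $d_G$ is shortest-path distance in $G$. $J$ is a common induced subgraph of each $G_i$ via injective maps $\iota_i:V(J)\to V(G_i)$ with $\iota_i(x)\iota_i(y)\in E(G_i)$ iff $xy\in E(J)$; $J_i$ is the subgraph of $G_i$ induced by $\iota_i(V(J))$. The $J$-amalgamation $H=\amalg\{(G_i|J_i)\}$ is obtained from the disjoint union of the $G_i$ by identifying, for each $x\in V(J)$, all vertices $\iota_i(x)$ into a single vertex; each $G_i$ is regarded as a subgraph of $H$, so $V(H)=V(J)\cup\bigcup_iV(G_i-J_i)$. $\parallel(J_i:G_i)$ denotes the set of edges $uv$ of $G_i-J_i$ (both ends outside $V(J_i)$) such that $d_{G_i}(w,u)=d_{G_i}(w,v)$ for every $w\in V(J_i)$. *)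

(* Defs.v *)
From mathcomp Require Import all_boot.
Set Implicit Arguments. Unset Strict Implicit. Unset Printing Implicit Defensive.

Record graph := Graph { gV : finType; gE : rel gV }.
Arguments gE : clear implicits.

Definition simple_graph (G : graph) : Prop :=
  symmetric (gE G) /\ irreflexive (gE G).

Definition connected_graph (G : graph) : Prop :=
  (0 < #|gV G|)%N /\ forall x y : gV G, connect (gE G) x y.

Definition walkn (G : graph) (n : nat) (x y : gV G) : bool :=
  [exists p : n.-tuple (gV G), path (gE G) x p && (last x p == y)].
Arguments walkn : clear implicits.

(* shortest-path distance d_G(x,y): least n with a walk of length n
   (equals #|V| when y is unreachable, which never happens in a connected graph) *)
Definition dist (G : graph) (x y : gV G) : nat :=
  find (fun n => walkn G n x y) (iota 0 #|gV G|).
Arguments dist : clear implicits.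

Definition induced_emb (J G : graph) (f : gV J -> gV G) : Prop :=
  injective f /\ forall x y, gE G (f x) (f y) = gE J x y.

Definition parallel_edge (J G : graph) (f : gV J -> gV G) (u v : gV G) : bool :=
  [&& u \notin codom f, v \notin codom f, gE G u v &
      [forall x : gV J, dist G (f x) u == dist G (f x) v]].

(* Vertices of the J-amalgamation: V(J) together with, for each i, the
   vertices of G_i - J_i. *)
Definition amal_V (I : finType) (J : graph) (G : I -> graph)
  (f : forall i, gV J -> gV (G i)) : finType :=
  (gV J + {i : I & {v : gV (G i) | v \notin codom (f i)}})%type.

(* The image in H of a vertex of G_i (G_i regarded as a subgraph of H). *)
Definition amal_emb (I : finType) (J : graph) (G : I -> graph)
  (f : forall i, gV J -> gV (G i)) (i : I) (v : gV (G i)) : amal_V f :=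
  (if v \in codom (f i) as b return (v \in codom (f i)) = b -> amal_V f
   then fun h => inl (iinv h)
   else fun h => inr (Tagged (fun i => {v : gV (G i) | v \notin codom (f i)})
                             (exist _ v (negbT h))))
  (erefl _).

Definition amalgam (I : finType) (J : graph) (G : I -> graph)
  (f : forall i, gV J -> gV (G i)) : graph :=
  @Graph (amal_V f)
    (fun a b => [exists i, exists v : gV (G i), exists w : gV (G i),
       [&& amal_emb f v == a, amal_emb f w == b & gE (G i) v w]]).

(* Main.v *)
Require Import Defs.
From mathcomp Require Import all_boot.
From Stdlib Require Classical.
Set Implicit Arguments. Unset Strict Implicit. Unset Printing Implicit Defensive.

Lemma walknP (G : graph) n (x y : gV G) :
  reflect (exists s, [/\ size s = n, path (gE G) x s & last x s = y]) (walkn G n x y).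
Proof.
apply: (iffP existsP) => [[p /andP[hp /eqP hl]]|[s [hs hp hl]]].
  by exists (val p); rewrite size_tuple.
have hs' : size s == n by rewrite hs.
by exists (Tuple hs'); rewrite /= hp hl eqxx.
Qed.

Lemma dist_le (G : graph) n (x y : gV G) : walkn G n x y -> dist G x y <= n.
Proof.
move=> hw; rewrite /dist; case: (ltnP n #|gV G|) => hn; last first.
  by apply: leq_trans (find_size _ _) _; rewrite size_iota.
rewrite leqNgt; apply/negP => hlt.
have := before_find 0 hlt; rewrite nth_iota //= ?hw //.
Qed.

Lemma dist_walk (G : graph) n (x y : gV G) : walkn G n x y -> walkn G (dist G x y) x y.
Proof.
case/walknP => s [_ hp hl].
case: (shortenP hp) hl => s' hp' hu _ hl.
have hsz : size s' < #|gV G|.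
  by rewrite -ltnS -[(size s').+1]/(size (x :: s')) -(card_uniqP hu) ltnS max_card.
have hw : walkn G (size s') x y by apply/walknP; exists s'.
have hh : has (fun n => walkn G n x y) (iota 0 #|gV G|).
  by apply/hasP; exists (size s'); rewrite ?mem_iota.
have := nth_find 0 hh; rewrite nth_iota //.
by rewrite -[X in _ < X](size_iota 0 #|gV G|) -has_find.
Qed.

Lemma dep_if (b : bool) T (F : b = true -> T) (G : b = false -> T) (P : T -> Prop) :
  (forall h, P (F h)) -> (forall h, P (G h)) ->
  P ((if b as b' return b = b' -> T then F else G) (erefl b)).
Proof. by destruct b; auto. Qed.

Lemma embP (I : finType) (J : graph) (G : I -> graph)
  (f : forall i, gV J -> gV (G i)) i (v : gV (G i)) :
  (exists h : v \in codom (f i), amal_emb f v = inl (iinv h)) \/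
  (exists h : v \notin codom (f i), amal_emb f v =
     inr (Tagged (fun i => {v : gV (G i) | v \notin codom (f i)}) (exist _ v h))).
Proof.
rewrite /amal_emb.
match goal with |- context [?t (erefl ?b)] => pattern (t (erefl b)) end.
apply: dep_if => h.
  by left; exists h.
by right; exists (negbT h).
Qed.

Lemma emb_inlE (I : finType) (J : graph) (G : I -> graph)
  (f : forall i, gV J -> gV (G i)) i (w : gV (G i)) x :
  amal_emb f w = inl x -> w = f i x.
Proof.
case: (embP f w) => [[h ->] [<-]|[h ->]] //.
by rewrite f_iinv.
Qed.

Lemma emb_inl (I : finType) (J : graph) (G : I -> graph)
  (f : forall i, gV J -> gV (G i)) i (hi : injective (f i)) x :
  amal_emb f (f i x) = inl x.
Proof.
case: (embP f (f i x)) => [[h ->]|[h _]]; last by rewrite codom_f in h.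
by congr inl; apply: hi; rewrite f_iinv.
Qed.

Lemma emb_tag (I : finType) (J : graph) (G : I -> graph)
  (f : forall i, gV J -> gV (G i)) j (w : gV (G j)) i (v : gV (G i)) :
  v \notin codom (f i) -> amal_emb f w = amal_emb f v -> j = i.
Proof.
move=> hv; case: (embP f v) => [[h _]|[h ->]]; first by rewrite h in hv.
case: (embP f w) => [[h' ->]//|[h' ->]] /(congr1 (fun a : amal_V f => if a is inr t then tag t else j)) //.
Qed.

Lemma emb_inj (I : finType) (J : graph) (G : I -> graph)
  (f : forall i, gV J -> gV (G i)) i (hi : injective (f i)) (w v : gV (G i)) :
  amal_emb f w = amal_emb f v -> w = v.
Proof.
case: (embP f v) => [[h ->]|[h ->]].
  by move/emb_inlE ->; rewrite f_iinv.
case: (embP f w) => [[hh ->]//|[hh ->]].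
move/(congr1 (fun a : amal_V f => if a is inr t then Some t else None)).
move=> E.
have E2 : Tagged (fun i0 : I => {v0 : gV (G i0) | v0 \notin codom (f i0)}) (exist _ w hh)
  = Tagged (fun i0 : I => {v0 : gV (G i0) | v0 \notin codom (f i0)}) (exist _ v h).
  exact: (congr1 (odflt (Tagged (fun i0 : I => {v0 : gV (G i0) | v0 \notin codom (f i0)}) (exist _ w hh))) E).
by have := congr1 val (eq_from_Tagged E2).
Qed.

Lemma dist_size (G : graph) (x y : gV G) : dist G x y <= #|gV G|.
Proof.
have := find_size (fun n => walkn G n x y) (iota 0 #|gV G|).
by rewrite size_iota.
Qed.

Lemma dist_max (G : graph) (x y : gV G) :
  ~~ walkn G (dist G x y) x y -> dist G x y = #|gV G|.
Proof.
move=> h; apply/eqP; rewrite eqn_leq dist_size /= leqNgt; apply/negP => lt.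
have hh : has (fun n => walkn G n x y) (iota 0 #|gV G|).
  by rewrite has_find size_iota.
have := nth_find 0 hh; rewrite nth_iota //.
  by move=> h'; rewrite h' in h.
Qed.

Lemma emb_edge (I : finType) (J : graph) (G : I -> graph)
  (f : forall i, gV J -> gV (G i)) i (v w : gV (G i)) :
  gE (G i) v w -> gE (amalgam f) (amal_emb f v) (amal_emb f w).
Proof.
move=> e; apply/existsP; exists i; apply/existsP; exists v; apply/existsP; exists w.
by rewrite !eqxx e.
Qed.

Lemma map_walk (I : finType) (J : graph) (G : I -> graph)
  (f : forall i, gV J -> gV (G i)) i (x : gV (G i)) s :
  path (gE (G i)) x s -> path (gE (amalgam f)) (amal_emb f x) (map (@amal_emb _ _ _ f i) s).
Proof.
elim: s x => [//|y s IH] x /andP[e p]; apply/andP; split; [exact: emb_edge | exact: IH].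
Qed.

Lemma edge_inv (I : finType) (J : graph) (G : I -> graph)
  (f : forall i, gV J -> gV (G i)) (hf : forall j, injective (f j)) i (w : gV (G i)) a :
  w \notin codom (f i) -> gE (amalgam f) a (amal_emb f w) ->
  exists2 w', a = amal_emb f w' & gE (G i) w' w.
Proof.
move=> hw /existsP[j /existsP[v1 /existsP[w1 /and3P[/eqP E1 /eqP E2 e]]]].
have ej := emb_tag hw E2; subst j.
have := emb_inj (hf i) E2 => ?; subst w1.
by exists v1.
Qed.

Lemma split_walk (I : finType) (J : graph) (G : I -> graph)
  (f : forall i, gV J -> gV (G i)) (hf : forall j, injective (f j)) i b
  (hb : ~ exists2 w' : gV (G i), w' \notin codom (f i) & b = amal_emb f w') p :
  forall w : gV (G i), w \notin codom (f i) ->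
  path (gE (amalgam f)) b p -> last b p = amal_emb f w ->
  exists x k, [/\ k <= size p, walkn (amalgam f) (size p - k) b (inl x)
                 & walkn (G i) k (f i x) w].
Proof.
elim/last_ind: p => [|q z IH] w hw.
  by move=> _ /= E; case: hb; exists w.
rewrite rcons_path last_rcons => /andP[pq e] E; subst z.
case: (edge_inv hf hw e) => w' E' e'.
case: (boolP (w' \in codom (f i))) => hw'.
  case/codomP: hw' => x ?; subst w'.
  rewrite emb_inl // in E'.
  exists x, 1; split; first by rewrite size_rcons.
    by apply/walknP; exists q; rewrite size_rcons subn1.
  by apply/walknP; exists [:: w]; rewrite /= e'.
case: (IH w' hw' pq E') => x [k [hk h1 h2]].
exists x, k.+1; split; first by rewrite size_rcons.
  by rewrite size_rcons subSS.
case/walknP: h2 => s [hs hp hl]; apply/walknP; exists (rcons s w).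
by rewrite size_rcons hs rcons_path hp hl e' last_rcons.
Qed.

Lemma le_side (I : finType) (J : graph) (G : I -> graph)
  (f : forall i, gV J -> gV (G i)) (hf : forall j, injective (f j))
  (a : gV (amalgam f)) (i : I) (u v : gV (G i))
  (ha : ~ exists2 w' : gV (G i), w' \notin codom (f i) & a = amal_emb f w')
  (hv : v \notin codom (f i)) (e : gE (G i) v u)
  (hpar : forall x, dist (G i) (f i x) u = dist (G i) (f i x) v) :
  dist (amalgam f) a (amal_emb f u) <= dist (amalgam f) a (amal_emb f v).
Proof.
set n := dist (amalgam f) a (amal_emb f v).
case: (boolP (walkn (amalgam f) n a (amal_emb f v))) => hw; last first.
  rewrite /n (dist_max hw); exact: dist_size.
case/walknP: hw => s [hs hp hl].
case: (split_walk hf ha hv hp hl) => x [k [hk h1 h2]].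
rewrite hs in hk h1.
have hd : dist (G i) (f i x) u <= k by rewrite hpar; apply: dist_le h2.
have hwu : walkn (G i) k.+1 (f i x) u.
  case/walknP: h2 => t [ht tp tl]; apply/walknP; exists (rcons t u).
  by rewrite size_rcons ht rcons_path tp tl e last_rcons.
case/walknP: (dist_walk hwu) => t [ht tp tl].
case/walknP: h1 => q [hq qp ql].
apply: (@leq_trans (n - k + dist (G i) (f i x) u)).
  apply: dist_le; apply/walknP; exists (q ++ map (@amal_emb _ _ _ f i) t); split.
  - by rewrite size_cat size_map hq ht.
  - rewrite cat_path qp ql /= -(emb_inl (hf i) x); exact: map_walk.
  - by rewrite last_cat ql -(emb_inl (hf i) x) last_map tl.
by rewrite -[leqRHS](subnK hk) leq_add2l.
Qed.

Theorem lemma1 (I : finType) (J : graph) (G : I -> graph)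
  (f : forall i, gV J -> gV (G i))
  (hJ : simple_graph J) (hJc : connected_graph J)
  (hG : forall i, simple_graph (G i)) (hGc : forall i, connected_graph (G i))
  (hf : forall i, induced_emb (f i))
  (a : gV (amalgam f)) (i : I) (u v : gV (G i))
  (huv : parallel_edge (f i) u v)
  (hd : dist (amalgam f) a (amal_emb f u) <> dist (amalgam f) a (amal_emb f v)) :
  exists2 w : gV (G i), w \notin codom (f i) & a = amal_emb f w.
Proof.
have hinj : forall j, injective (f j) by move=> j; case: (hf j).
case/and4P: huv => hu hv e /forallP hpar.
apply: Classical_Prop.NNPP => ha.
apply: hd; apply/eqP; rewrite eqn_leq; apply/andP; split.
  apply: le_side => //; first by rewrite (proj1 (hG i)).
  by move=> x; apply/eqP; exact: hpar.
apply: le_side => //.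
by move=> x; apply/eqP; rewrite eq_sym; exact: hpar.
Qed.
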